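(* Let $\mathcal{D}\subseteq\mathbb{R}^n$, let $f_{\mathrm{cl}}:\mathcal{D}\to\mathbb{R}^n$ be locally Lipschitz, and let $h:\mathcal{D}\to\mathbb{R}$ be locally Lipschitz with $h(\mathcal{D})\subseteq[h_{\min},h_{\max}]$ for some constants $h_{\min}<0<h_{\max}$. Let $S=\{x\in\mathcal{D}: h(x)\ge 0\}$. For a function $\alpha:\mathbb{R}\to\mathbb{R}$, say that the barrier condition holds with $\alpha$ if $$\sup_{\zeta\in\partial^C h(x)}\zeta^\top f_{\mathrm{cl}}(x)\;\ge\;-\alpha\big(h(x)\big)\qquad\text{for all }x\in\mathcal{D}.$$ Then the following are equivalent: (a) There exists an extended class-$\mathcal{K}_\infty$ function $\alpha$ satisfying the one-sided slope bounds $$\limsup_{s\downarrow 0}\frac{\alpha(s)}{s}<\infty,\qquad \liminf_{s\uparrow 0}\frac{\alpha(s)}{s}>0,$$ such that the barrier condition holds with $\alpha$. (b) There exist constants $0<\alpha_1\le\alpha_m<\infty$ such that the barrier condition holds with the Leaky-ReLU function $$\overline{\alpha}(s)=\begin{cases}\alpha_m s,& s\ge 0,\\ \alpha_1 s,& s<0.\end{cases}$$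
   Context: $\partial^C h(x)$ denotes the Clarke generalized gradient of $h$ at $x$ (which reduces to $\{\nabla h(x)\}$ where $h$ is continuously differentiable). An extended class-$\mathcal{K}_\infty$ function is a continuous, strictly increasing function $\alpha:\mathbb{R}\to\mathbb{R}$ with $\alpha(0)=0$ and $\alpha(s)\to\pm\infty$ as $s\to\pm\infty$. *)

(* Defs.v *)
From HB Require Import structures.
From mathcomp Require Import all_boot all_order all_algebra.
From mathcomp Require Import all_classical all_reals all_analysis.
Set Implicit Arguments. Unset Strict Implicit. Unset Printing Implicit Defensive.
Import Order.TTheory GRing.Theory Num.Theory.
Import numFieldNormedType.Exports.
Local Open Scope classical_set_scope.
Local Open Scope ring_scope.

(* Vectors of R^n are row vectors 'rV[R]_n (with the library's max-norm). *)
Definition dotv (R : realType) (n : nat) (u v : 'rV[R]_n) : R :=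
  \sum_(i < n) u ord0 i * v ord0 i.

Definition locally_lipschitz_on (R : realType) (n m : nat)
  (D : set 'rV[R]_n) (f : 'rV[R]_n -> 'rV[R]_m) : Prop :=
  forall x, D x -> exists r : R, 0 < r /\ exists L : R,
    forall y z, D y -> D z -> `|y - x| < r -> `|z - x| < r ->
      `|f y - f z| <= L * `|y - z|.

Definition locally_lipschitz_on_R (R : realType) (n : nat)
  (D : set 'rV[R]_n) (h : 'rV[R]_n -> R) : Prop :=
  forall x, D x -> exists r : R, 0 < r /\ exists L : R,
    forall y z, D y -> D z -> `|y - x| < r -> `|z - x| < r ->
      `|h y - h z| <= L * `|y - z|.

Definition clarke_dd (R : realType) (n : nat) (h : 'rV[R]_n -> R)
  (x v : 'rV[R]_n) : \bar R :=
  limf_esup (fun p : 'rV[R]_n * R => ((h (p.1 + p.2 *: v) - h p.1) / p.2)%:E)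
            (filter_prod (nbhs x) (0^'+)).

Definition clarke_grad (R : realType) (n : nat) (h : 'rV[R]_n -> R)
  (x : 'rV[R]_n) : set 'rV[R]_n :=
  [set zeta | forall v, ((dotv zeta v)%:E <= clarke_dd h x v)%E].

Definition barrier_condition (R : realType) (n : nat) (D : set 'rV[R]_n)
  (f : 'rV[R]_n -> 'rV[R]_n) (h : 'rV[R]_n -> R) (alpha : R -> R) : Prop :=
  forall x, D x ->
    ((- alpha (h x))%:E <= ereal_sup [set (dotv zeta (f x))%:E | zeta in clarke_grad h x])%E.

Definition ext_class_Kinf (R : realType) (alpha : R -> R) : Prop :=
  continuous alpha /\ {mono alpha : s t / s < t} /\ alpha 0 = 0 /\
  alpha @ +oo --> +oo /\ alpha @ -oo --> -oo.

Definition leaky_relu (R : realType) (a1 am : R) (s : R) : R :=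
  if 0 <= s then am * s else a1 * s.

(* Main.v *)
Require Import Defs.
From HB Require Import structures.
From mathcomp Require Import all_boot all_order all_algebra.
From mathcomp Require Import all_classical all_reals all_analysis.
From mathcomp Require Import lra.
Import Order.TTheory GRing.Theory Num.Theory.
Import numFieldNormedType.Exports.
Local Open Scope classical_set_scope.
Local Open Scope ring_scope.

Lemma right_ball (R : realType) (V : set R) : (0:R)^'+ V ->
  exists2 e : R, 0 < e & forall s, 0 < s -> s < e -> V s.
Proof.
move=> /nbhs_ballP [e e0 He]; exists e => // s s0 se; apply: He => //.
by rewrite /ball /= sub0r normrN gtr0_norm.
Qed.

Lemma left_ball (R : realType) (V : set R) : (0:R)^'- V ->
  exists2 e : R, 0 < e & forall s, s < 0 -> - e < s -> V s.
Proof.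
move=> /nbhs_ballP [e e0 He]; exists e => // s s0 se; apply: He => //.
by rewrite /ball /= sub0r normrN ltr0_norm // ltrNl.
Qed.

Lemma sup_bound (R : realType) (g : R -> R) :
  (limf_esup (fun s => (g s)%:E) (0^'+) < +oo)%E ->
  exists M : R, exists2 e : R, 0 < e & forall s, 0 < s -> s < e -> g s <= M.
Proof.
rewrite limf_esupE => /ereal_inf_lt [_ [V FV <-] Hlt].
have [e e0 He] := @right_ball R V FV.
case E: (ereal_sup [set (g s)%:E | s in V]) Hlt => [r| |] // _.
- exists r, e => // s s0 se.
  have := @ereal_sup_ubound _ [set (g s)%:E | s in V] (g s)%:E.
  by rewrite E lee_fin; apply; exists s => //; apply: He.
- exists 0, e => // s s0 se.
  have := @ereal_sup_ubound _ [set (g s)%:E | s in V] (g s)%:E.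
  by rewrite E leeNy_eq => /(_ (ex_intro2 _ _ s (He s s0 se) erefl)).
Qed.

Lemma inf_bound (R : realType) (g : R -> R) :
  ((0%:E) < limf_einf (fun s => (g s)%:E) (0^'-))%E ->
  exists m : R, 0 < m /\ exists2 e : R, 0 < e & forall s, s < 0 -> - e < s -> m <= g s.
Proof.
rewrite limf_einfE => /ereal_sup_gt [_ [V FV <-] Hgt].
have [e e0 He] := @left_ball R V FV.
case E: (ereal_inf [set (g s)%:E | s in V]) Hgt => [r| |] // Hgt.
- exists r; split; first by rewrite -lte_fin.
  exists e => // s s0 se.
  have := @ereal_inf_lbound _ [set (g s)%:E | s in V] (g s)%:E.
  by rewrite E lee_fin; apply; exists s => //; apply: He.
- exists 1; split => //; exists e => // s s0 se.
  have := @ereal_inf_lbound _ [set (g s)%:E | s in V] (g s)%:E.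
  by rewrite E leye_eq => /(_ (ex_intro2 _ _ s (He s s0 se) erefl)).
Qed.

Lemma leaky_lip (R : realType) (a1 am x y : R) : 0 < a1 -> a1 <= am ->
  `|leaky_relu a1 am x - leaky_relu a1 am y| <= am * `|x - y|.
Proof.
move=> a10 a1m; rewrite /leaky_relu.
rewrite ler_norml.
have [xy|xy] := lerP x y.
- idtac.
  case: ifP => hx; case: ifP => hy; apply/andP; split; nra.
- idtac.
  case: ifP => hx; case: ifP => hy; apply/andP; split; nra.
Qed.

Lemma leaky_K (R : realType) (a1 am : R) : 0 < a1 -> a1 <= am ->
  ext_class_Kinf (leaky_relu a1 am).
Proof.
move=> a10 a1m; have am0 : 0 < am by apply: lt_le_trans a1m.
split; [|split; [|split; [|split]]].
- move=> x; apply/cvgrPdist_le => eps e0.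
  near=> y; apply: le_trans (@leaky_lip R a1 am x y a10 a1m) _.
  near: y; apply/nbhs_ballP; exists (eps / am) => /=; first exact: divr_gt0.
  move=> y; rewrite /ball /= => Hy.
  by rewrite mulrC -ler_pdivlMr //; exact: ltW.
- apply: leW_mono; apply: le_mono => s t st; rewrite /leaky_relu.
  by case: ifP => hs; case: ifP => ht; nra.
- by rewrite /leaky_relu lexx mulr0.
- apply/cvgryPge => A.
  exists (Num.max 0 (A / am)); split; first exact: num_real.
  move=> x; rewrite gt_max => /andP[x0 xA].
  rewrite /leaky_relu (ltW x0) mulrC -ler_pdivrMr //; exact: ltW.
- apply/cvgrNyPle => A.
  exists (Num.min 0 (A / a1)); split; first exact: num_real.
  move=> x; rewrite lt_min => /andP[x0 xA].
  rewrite /leaky_relu (leNgt 0 x) x0 /= mulrC -ler_pdivlMr //; exact: ltW.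
Unshelve. all: by end_near.
Qed.

Theorem theorem1 (R : realType) (n : nat) (D : set 'rV[R]_n)
  (f_cl : 'rV[R]_n -> 'rV[R]_n) (h : 'rV[R]_n -> R) (hmin hmax : R) :
  open D ->
  locally_lipschitz_on D f_cl ->
  locally_lipschitz_on_R D h ->
  hmin < 0 -> 0 < hmax ->
  (forall x, D x -> hmin <= h x <= hmax) ->
  (exists alpha : R -> R,
      [/\ ext_class_Kinf alpha,
          (limf_esup (fun s => (alpha s / s)%:E) (0^'+) < +oo)%E,
          ((0%:E) < limf_einf (fun s => (alpha s / s)%:E) (0^'-))%E
        & barrier_condition D f_cl h alpha])
  <->
  (exists alpha1 alpham : R,
      [/\ 0 < alpha1, alpha1 <= alpham
        & barrier_condition D f_cl h (leaky_relu alpha1 alpham)]).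
Proof.
move=> _ _ _ hmin0 hmax0 hb; split.
- move=> [alpha [[_ [mono [a0 _]]] Hsup Hinf HB]].
  have lea s t : s <= t -> alpha s <= alpha t.
    by rewrite le_eqVlt => /orP[/eqP -> //|st]; apply: ltW; rewrite mono.
  have [M [e1 e10 HM]] := @sup_bound R (fun s => alpha s / s) Hsup.
  have [m [m0 [e2 e20 Hm]]] := @inf_bound R (fun s => alpha s / s) Hinf.
  have ahm : 0 <= alpha hmax by rewrite -a0; apply: lea; exact: ltW.
  have ae2 : alpha (- e2) < 0 by rewrite -a0 mono oppr_lt0.
  set r := alpha (- e2) / hmin.
  have rE : r * hmin = alpha (- e2) by rewrite /r divfK // lt_eqF.
  have r0 : 0 < r by rewrite /r ltr_ndivlMr // mul0r.
  set q := alpha hmax / e1.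
  have qE : q * e1 = alpha hmax by rewrite /q divfK // gt_eqF.
  have q0 : 0 <= q by rewrite /q divr_ge0 // ltW.
  set a1 := Num.min m r.
  set am := Num.max (Num.max M q) a1.
  have a1m : a1 <= m by rewrite /a1 ge_min lexx.
  have a1r : a1 <= r by rewrite /a1 ge_min lexx orbT.
  have a10 : 0 < a1 by rewrite /a1 lt_min m0 r0.
  have amM : M <= am by rewrite /am !le_max lexx.
  have amq : q <= am by rewrite /am !le_max lexx orbT.
  have ama : a1 <= am by rewrite /am le_max lexx orbT.
  have claim s : hmin <= s <= hmax -> alpha s <= leaky_relu a1 am s.
    move=> /andP[hs1 hs2]; rewrite /leaky_relu; case: ifP => s0.
    + have [->|sp] := eqVneq s 0; first by rewrite a0 mulr0.
      have {s0 sp} sp : 0 < s by rewrite lt_neqAle eq_sym sp.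
      have [se|se] := ltP s e1.
      * have := HM s sp se; rewrite ler_pdivrMr // => H; nra.
      * have := lea _ _ hs2; nra.
    + have sn : s < 0 by rewrite ltNge s0.
      have [se|se] := ltP (- e2) s.
      * have := Hm s sn se; rewrite ler_ndivlMr // => H; nra.
      * have := lea _ _ se; nra.
  exists a1, am; split => // x Dx.
  apply: le_trans (HB x Dx); rewrite lee_fin lerN2; apply: claim; exact: hb.
- move=> [a1 [am [a10 a1m HB]]]; exists (leaky_relu a1 am).
  have am0 : 0 < am by apply: lt_le_trans a1m.
  split => //.
  + exact: leaky_K.
  + rewrite limf_esupE; apply: (@le_lt_trans _ _ am%:E); last exact: ltry.
    apply: (@le_trans _ _ (ereal_sup [set (leaky_relu a1 am s / s)%:E | s in [set s : R | 0 < s]])).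
      apply: ereal_inf_lbound; exists [set s : R | 0 < s] => //; exact: nbhs_right_gt.
    apply: ge_ereal_sup => _ [s /= s0 <-].
    by rewrite lee_fin /leaky_relu (ltW s0) mulfK // gt_eqF.
  + rewrite limf_einfE; apply: (@lt_le_trans _ _ a1%:E); first by rewrite lte_fin.
    apply: (@le_trans _ _ (ereal_inf [set (leaky_relu a1 am s / s)%:E | s in [set s : R | s < 0]])); last first.
      apply: ereal_sup_ubound; exists [set s : R | s < 0] => //; exact: nbhs_left_lt.
    apply: le_ereal_inf_tmp => _ [s /= s0 <-].
    by rewrite lee_fin /leaky_relu (leNgt 0 s) s0 /= mulfK // lt_eqF.
Qed.
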